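(* An abstract $b$-flip $f$ is non ambiguous if and only if (a) it is a sliding flip, and (b) for every oriented $(S,V)$ and every application of $f$ to a branched ideal triangulation $(T,b)$ of $(S,V)$ producing $(T',b')$, one has $S_\pm(T,b)=S_\pm(T',b')$. In that case the boundary $1$-cycles $\partial S_\pm$ are also preserved.
   Context: $(S,V)$: a closed surface with finite set of marked points, $\chi(S)-|V|<0$. A branching $b$ of an ideal triangulation (vertex set $V$) orients edges so that on each abstract triangle the orientations are induced by a total order $v_0<v_1<v_2$ of its vertices, edges pointing to the larger endpoint. An abstract $b$-flip acts on a quadrilateral $Q=t_1\cup t_2$ with diagonal $e$. It replaces $e$ by the other diagonal $e'$, oriented so that the result is branched with boundary edges of $Q$ unchanged. It is forced if it is the unique branched enhancement of the naked flip starting from $(t_1\cup t_2,b)$. It is non ambiguous if both it and its inverse $b$-flip are forced. It is a sliding flip if at least one of it and its inverse is forced. When $S$ is oriented, for a branched triangle $t$ set $*_{(t,b)}=+1$ if the orientation of $t$ given by $(v_0,v_1,v_2)$ agrees with that of $S$ and $-1$ otherwise. $S_\pm(T,b)$ is the union of the triangles with $*_{(t,b)}=\pm1$, so $S=S_+\cup S_-$, and $\partial S_\pm$ is the boundary $1$-cycle of the simplicial $2$-chain supported by $S_\pm$. *)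

(* Defs.v *)
From mathcomp Require Import all_boot all_order all_algebra all_fingroup.
Set Implicit Arguments. Unset Strict Implicit. Unset Printing Implicit Defensive.

(* Branched triangles: a triangle with vertices p q r (in a vertex type V)
   whose edges are oriented by the relation a (a x y = "edge x->y").
   It is branched iff the orientations are induced by a total order
   u0 < u1 < u2 of its vertices (edges pointing to the larger endpoint). *)
Definition induced {V : Type} (a : rel V) (u0 u1 u2 : V) : bool :=
  [&& a u0 u1, a u1 u2 & a u0 u2].

Definition tri_branched {V : Type} (a : rel V) (p q r : V) : bool :=
  [|| induced a p q r, induced a p r q, induced a q p r,
      induced a q r p, induced a r p q | induced a r q p].

(* Abstract quadrilateral: vertices 0,1,2,3 in cyclic order; boundary side i
   joins i and i+1 (mod 4); diagonal e = {0,2}, other diagonal e' = {1,3}.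
   t1 = (0,1,2), t2 = (0,2,3); after the flip (0,1,3), (1,2,3). *)
Definition q0 : 'I_4 := inord 0.
Definition q1 : 'I_4 := inord 1.
Definition q2 : 'I_4 := inord 2.
Definition q3 : 'I_4 := inord 3.

(* bd i = true iff boundary side i is oriented i -> i+1 *)
Definition bd_arr (bd : 'I_4 -> bool) (i j : 'I_4) : bool :=
  ((j == ordS i) && bd i) || ((i == ordS j) && ~~ bd j).

(* d = true iff e is oriented 0 -> 2 *)
Definition qarr_before (bd : 'I_4 -> bool) (d : bool) : rel 'I_4 :=
  fun i j => [|| bd_arr bd i j, [&& i == q0, j == q2 & d] | [&& i == q2, j == q0 & ~~ d]].

(* d' = true iff e' is oriented 1 -> 3 *)
Definition qarr_after (bd : 'I_4 -> bool) (d' : bool) : rel 'I_4 :=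
  fun i j => [|| bd_arr bd i j, [&& i == q1, j == q3 & d'] | [&& i == q3, j == q1 & ~~ d']].

Definition branched_before (bd : 'I_4 -> bool) (d : bool) : bool :=
  tri_branched (qarr_before bd d) q0 q1 q2 && tri_branched (qarr_before bd d) q0 q2 q3.

Definition branched_after (bd : 'I_4 -> bool) (d' : bool) : bool :=
  tri_branched (qarr_after bd d') q0 q1 q3 && tri_branched (qarr_after bd d') q1 q2 q3.

(* An abstract b-flip: boundary orientations (unchanged), orientation of e
   before and of e' after. *)
Record bflip := BFlip { fbd : 'I_4 -> bool; fd : bool; fd' : bool }.

Definition is_bflip (f : bflip) : Prop :=
  branched_before (fbd f) (fd f) /\ branched_after (fbd f) (fd' f).

Definition forced (f : bflip) : Prop :=
  forall x : bool, branched_after (fbd f) x -> x = fd' f.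

Definition inv_forced (f : bflip) : Prop :=
  forall x : bool, branched_before (fbd f) x -> x = fd f.

Definition non_ambiguous (f : bflip) : Prop := forced f /\ inv_forced f.
Definition sliding (f : bflip) : Prop := forced f \/ inv_forced f.

(* Triangles form a finType T; corners of each triangle are 'I_3, listed in the
   cyclic order given by the orientation of S.  Side k of t joins corner k to
   corner k+1.  opp glues sides pairwise; gluings are orientation reversing:
   if opp (t,k) = (t',k') then corner k of t goes to corner k'+1 of t' and
   corner k+1 of t to corner k' of t'. *)
Definition is_osurface (T : finType) (opp : T * 'I_3 -> T * 'I_3) : Prop :=
  [/\ involutive opp,
      (forall s, opp s != s) &
      (forall t u : T, connect (fun x y => [exists k : 'I_3, (opp (x, k)).1 == y]) t u)].

(* arrows between corners of one triangle; bs k = true iff side k is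
   oriented from corner k to corner k+1 *)
Definition sarr (bs : 'I_3 -> bool) : rel 'I_3 :=
  fun i j => ((j == ordS i) && bs i) || ((i == ordS j) && ~~ bs j).

Definition c0 : 'I_3 := inord 0.
Definition c1 : 'I_3 := inord 1.
Definition c2 : 'I_3 := inord 2.

Definition is_branching (T : finType) (opp : T * 'I_3 -> T * 'I_3)
    (bo : T * 'I_3 -> bool) : Prop :=
  (forall s, bo (opp s) = ~~ bo s) /\
  (forall t, tri_branched (sarr (fun k => bo (t, k))) c0 c1 c2).

(* *_(t,b) = +1 : the order (v0,v1,v2) is a cyclic rotation of (0,1,2), i.e.
   it agrees with the orientation of S *)
Definition star_pos (T : finType) (bo : T * 'I_3 -> bool) (t : T) : bool :=
  let a := sarr (fun k => bo (t, k)) in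
  [|| induced a c0 c1 c2, induced a c1 c2 c0 | induced a c2 c0 c1].

(* Application of a flip at the edge e = side (t1,k1) glued to (t2,k2).
   Real quadrilateral positions R0..R3 (positive cyclic order):
   R0 = corner k1 of t1, R2 = corner k1+1 of t1, R3 = corner k1+2 of t1,
   R1 = corner k2+2 of t2.  Real side i joins R_i and R_{i+1}. *)
Section Application.
Variables (T : finType) (opp : T * 'I_3 -> T * 'I_3) (t1 : T) (k1 : 'I_3).

Definition t2 := (opp (t1, k1)).1.
Definition k2 := (opp (t1, k1)).2.

(* the surface side carrying real quadrilateral side i, oriented R_i -> R_{i+1} *)
Definition qside (i : 'I_4) : T * 'I_3 :=
  match val i with
  | 0 => (t2, ordS k2)
  | 1 => (t2, ordS (ordS k2))
  | 2 => (t1, ordS k1)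
  | _ => (t1, ordS (ordS k1))
  end.

Variable bo : T * 'I_3 -> bool.

Definition rbd (i : 'I_4) : bool := bo (qside i).
Definition rd : bool := bo (t1, k1).   (* R0 -> R2 *)

(* branching b' of T' (rd' = true iff the new diagonal is R1 -> R3).
   In T', t1 becomes t1' = (R3,R0,R1) and t2 becomes t2' = (R1,R2,R3),
   corners in positive order. *)
Definition flip_bo (rd' : bool) (s : T * 'I_3) : bool :=
  if s.1 == t1 then
    (match val s.2 with 0 => rbd q3 | 1 => rbd q0 | _ => rd' end)
  else if s.1 == t2 then
    (match val s.2 with 0 => rbd q1 | 1 => rbd q2 | _ => ~~ rd' end)
  else bo s.

(* Common refinement of T and T' : triangles outside Q, plus the four
   quarters of Q cut out by both diagonals (quarter i is adjacent to real
   side i).  S_pm are compared as unions of cells. *)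
Definition cell := (T + 'I_4)%type.
Definition valid_cell (c : cell) : bool :=
  match c with inl t => (t != t1) && (t != t2) | inr _ => true end.

(* S_+(T,b) : t1 = (R0,R2,R3) contains quarters 2,3; t2 = (R2,R0,R1) contains 0,1 *)
Definition Splus_T (c : cell) : bool :=
  match c with
  | inl t => star_pos bo t
  | inr i => if (i == q2) || (i == q3) then star_pos bo t1 else star_pos bo t2
  end.

(* S_+(T',b') : t1' contains quarters 3,0; t2' contains 1,2 *)
Definition Splus_T' (rd' : bool) (c : cell) : bool :=
  match c with
  | inl t => star_pos (flip_bo rd') t
  | inr i => if (i == q3) || (i == q0) then star_pos (flip_bo rd') t1
             else star_pos (flip_bo rd') t2
  end.

Definition Sminus_T (c : cell) : bool := ~~ Splus_T c.
Definition Sminus_T' (rd' : bool) (c : cell) : bool := ~~ Splus_T' rd' c.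

(* the cell on the other side of a surface side lying on the boundary of a cell *)
Definition cell_of_side (s : T * 'I_3) : cell :=
  if s.1 == t1 then inr (if s.2 == ordS k1 then q2 else q3)
  else if s.1 == t2 then inr (if s.2 == ordS k2 then q0 else q1)
  else inl s.1.

(* neighbour of cell c across its side k.  A quarter has side 0 = its real
   quadrilateral side, sides 1,2 = half-diagonals towards quarters i-1, i+1. *)
Definition nb (c : cell) (k : 'I_3) : cell :=
  match c with
  | inl t => cell_of_side (opp (t, k))
  | inr i => match val k with
             | 0 => cell_of_side (opp (qside i))
             | 1 => inr (ord_pred i)
             | _ => inr (ordS i)
             end
  end.

(* boundary 1-cycle of the 2-chain supported by R (triangles oriented by S):
   coefficient on the edge at side k of cell c, oriented as boundary of c *)
Definition bnd (R : cell -> bool) (c : cell) (k : 'I_3) : int :=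
  ((R c : nat)%:Z - (R (nb c k) : nat)%:Z)%R.

End Application.

(* An application of the abstract b-flip f to (T,b) at the side (t1,k1):
   an identification phi of the abstract quadrilateral with the real one
   transporting the branching of f before the flip to b, and rd' the
   resulting orientation of the new diagonal (transporting f after). *)
Definition application (f : bflip) (T : finType) (opp : T * 'I_3 -> T * 'I_3)
    (bo : T * 'I_3 -> bool) (t1 : T) (k1 : 'I_3) (phi : {perm 'I_4}) (rd' : bool) : Prop :=
  [/\ t1 != t2 opp t1 k1,
      (forall i j, qarr_before (fbd f) (fd f) i j =
                   qarr_before (rbd opp t1 k1 bo) (rd t1 k1 bo) (phi i) (phi j)) &
      (forall i j, qarr_after (fbd f) (fd' f) i j =
                   qarr_after (rbd opp t1 k1 bo) rd' (phi i) (phi j))].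

(* Main.v *)
Require Import Defs.
From mathcomp Require Import all_boot all_order all_algebra all_fingroup.
From Stdlib Require Import FunctionalExtensionality.
Set Implicit Arguments. Unset Strict Implicit. Unset Printing Implicit Defensive.

Definition Q0 : 'I_4 := @Ordinal 4 0 isT.
Definition Q1 : 'I_4 := @Ordinal 4 1 isT.
Definition Q2 : 'I_4 := @Ordinal 4 2 isT.
Definition Q3 : 'I_4 := @Ordinal 4 3 isT.
Definition C0 : 'I_3 := @Ordinal 3 0 isT.
Definition C1 : 'I_3 := @Ordinal 3 1 isT.
Definition C2 : 'I_3 := @Ordinal 3 2 isT.

Lemma EQ0 : q0 = Q0. Proof. by apply: val_inj; rewrite /= inordK. Qed.
Lemma EQ1 : q1 = Q1. Proof. by apply: val_inj; rewrite /= inordK. Qed.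
Lemma EQ2 : q2 = Q2. Proof. by apply: val_inj; rewrite /= inordK. Qed.
Lemma EQ3 : q3 = Q3. Proof. by apply: val_inj; rewrite /= inordK. Qed.
Lemma EC0 : c0 = C0. Proof. by apply: val_inj; rewrite /= inordK. Qed.
Lemma EC1 : c1 = C1. Proof. by apply: val_inj; rewrite /= inordK. Qed.
Lemma EC2 : c2 = C2. Proof. by apply: val_inj; rewrite /= inordK. Qed.

Definition mkbd (a b c d : bool) (i : 'I_4) : bool :=
  match val i with 0 => a | 1 => b | 2 => c | _ => d end.
Definition mk4 (p0 p1 p2 p3 : 'I_4) (i : 'I_4) : 'I_4 :=
  match val i with 0 => p0 | 1 => p1 | 2 => p2 | _ => p3 end.

Lemma L4 (i : 'I_4) : [\/ i = Q0, i = Q1, i = Q2 | i = Q3].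
Proof.
case: i => -[|[|[|[|n]]]] Hi //.
- by constructor 1; apply: val_inj.
- by constructor 2; apply: val_inj.
- by constructor 3; apply: val_inj.
- by constructor 4; apply: val_inj.
Qed.

Lemma L3 (k : 'I_3) : [\/ k = C0, k = C1 | k = C2].
Proof.
case: k => -[|[|[|n]]] Hi //.
- by constructor 1; apply: val_inj.
- by constructor 2; apply: val_inj.
- by constructor 3; apply: val_inj.
Qed.

Lemma mkbd_eta (bd : 'I_4 -> bool) : bd = mkbd (bd q0) (bd q1) (bd q2) (bd q3).
Proof.
rewrite EQ0 EQ1 EQ2 EQ3.
by apply: functional_extensionality => i; case: (L4 i) => ->.
Qed.

Lemma mk4_eta (phi : 'I_4 -> 'I_4) i : phi i = mk4 (phi q0) (phi q1) (phi q2) (phi q3) i.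
Proof. by rewrite EQ0 EQ1 EQ2 EQ3; case: (L4 i) => ->. Qed.

Lemma ordS0 : ordS C0 = C1. Proof. by apply: val_inj. Qed.
Lemma ordS1 : ordS C1 = C2. Proof. by apply: val_inj. Qed.
Lemma ordS2 : ordS C2 = C0. Proof. by apply: val_inj. Qed.

Definition st3 (a b c : bool) := [|| a && b && ~~ c, b && c && ~~ a | c && a && ~~ b].

Lemma st3_rot a b c : st3 a b c = st3 b c a.
Proof. by case: a; case: b; case: c. Qed.

Lemma star_st3 (T : finType) (bo : T * 'I_3 -> bool) t :
  star_pos bo t = st3 (bo (t, C0)) (bo (t, C1)) (bo (t, C2)).
Proof.
rewrite /star_pos /induced /sarr EC0 EC1 EC2.
by case: (bo (t, C0)); case: (bo (t, C1)); case: (bo (t, C2)).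
Qed.

Lemma star_rot (T : finType) (bo : T * 'I_3 -> bool) t k :
  star_pos bo t = st3 (bo (t, k)) (bo (t, ordS k)) (bo (t, ordS (ordS k))).
Proof.
rewrite star_st3; case: (L3 k) => ->; rewrite ?ordS2 ?ordS0 ?ordS1 ?ordS2 //.
- by rewrite st3_rot.
- by rewrite -st3_rot.
Qed.

Definition qarr_beforeC (bd : 'I_4 -> bool) (d : bool) : rel 'I_4 :=
  fun i j => [|| bd_arr bd i j, [&& i == Q0, j == Q2 & d] | [&& i == Q2, j == Q0 & ~~ d]].
Definition qarr_afterC (bd : 'I_4 -> bool) (d' : bool) : rel 'I_4 :=
  fun i j => [|| bd_arr bd i j, [&& i == Q1, j == Q3 & d'] | [&& i == Q3, j == Q1 & ~~ d']].
Definition branched_beforeC (bd : 'I_4 -> bool) (d : bool) : bool :=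
  tri_branched (qarr_beforeC bd d) Q0 Q1 Q2 && tri_branched (qarr_beforeC bd d) Q0 Q2 Q3.
Definition branched_afterC (bd : 'I_4 -> bool) (d' : bool) : bool :=
  tri_branched (qarr_afterC bd d') Q0 Q1 Q3 && tri_branched (qarr_afterC bd d') Q1 Q2 Q3.

Lemma qbE : qarr_before = qarr_beforeC.
Proof. by rewrite /qarr_before /qarr_beforeC EQ0 EQ2. Qed.
Lemma qaE : qarr_after = qarr_afterC.
Proof. by rewrite /qarr_after /qarr_afterC EQ1 EQ3. Qed.
Lemma bbE : branched_before = branched_beforeC.
Proof. by rewrite /branched_before /branched_beforeC qbE EQ0 EQ1 EQ2 EQ3. Qed.
Lemma baE : branched_after = branched_afterC.
Proof. by rewrite /branched_after /branched_afterC qaE EQ0 EQ1 EQ2 EQ3. Qed.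

Definition allb (P : bool -> bool) := if P true then P false else false.
Lemma allbP (P : bool -> bool) : allb P -> forall x, P x.
Proof. by rewrite /allb; case Ht: (P true) => // Hf []; rewrite ?Ht. Qed.
Lemma allbI (P : bool -> bool) : P true -> P false -> allb P.
Proof. by rewrite /allb => -> ->. Qed.
Fixpoint allL {X : Type} (P : X -> bool) (s : seq X) : bool :=
  match s with [::] => true | x :: s' => if P x then allL P s' else false end.
Lemma allLP {X : eqType} (P : X -> bool) s : allL P s -> forall x, x \in s -> P x.
Proof.
elim: s => [//|y s IH] /=; case Hy: (P y) => // Hs x.
by rewrite in_cons => /orP [/eqP -> //| /(IH Hs)].
Qed.
Lemma allLI {X : eqType} (P : X -> bool) s : (forall x, x \in s -> P x) -> allL P s.
Proof.
elim: s => [//|y s IH] /= H; rewrite H ?mem_head //; apply: IH => x Hx.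
by apply: H; rewrite in_cons Hx orbT.
Qed.

Definition forcedC bd e' := allb (fun x => branched_afterC bd x ==> (x == e')).
Definition inv_forcedC bd e := allb (fun x => branched_beforeC bd x ==> (x == e)).

Lemma forcedP f : forced f <-> forcedC (fbd f) (fd' f).
Proof.
rewrite /forced /forcedC baE; split.
- by move=> H; apply: allbI; apply/implyP => /H ->.
- by move=> H x Hx; move: (allbP H x); rewrite Hx => /eqP.
Qed.
Lemma inv_forcedP f : inv_forced f <-> inv_forcedC (fbd f) (fd f).
Proof.
rewrite /inv_forced /inv_forcedC bbE; split.
- by move=> H; apply: allbI; apply/implyP => /H ->.
- by move=> H x Hx; move: (allbP H x); rewrite Hx => /eqP.
Qed.

Definition ords4 : seq 'I_4 := [:: Q0; Q1; Q2; Q3].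
Lemma mem_ords4 i : i \in ords4.
Proof. by case: (L4 i) => ->. Qed.

Definition Pq (x0 x1 x2 y1 y2 rd' : bool) :=
  [&& st3 (~~ x0) y1 y2 == st3 x0 x1 x2, st3 x2 y1 rd' == st3 x0 x1 x2
    & st3 y2 x1 (~~ rd') == st3 x0 x1 x2].

Definition c1body (x0 x1 x2 y1 y2 rd' : bool) (p0 p1 p2 p3 : 'I_4) : bool :=
  let Rb := mkbd y1 y2 x1 x2 in
  let pp := mk4 p0 p1 p2 p3 in
  let fb := mkbd (qarr_beforeC Rb x0 p0 p1) (qarr_beforeC Rb x0 p1 p2)
                 (qarr_beforeC Rb x0 p2 p3) (qarr_beforeC Rb x0 p3 p0) in
  let E := qarr_beforeC Rb x0 p0 p2 in
  let E' := qarr_afterC Rb rd' p1 p3 in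
  if uniq [:: p0; p1; p2; p3] then
  if branched_beforeC fb E then if branched_afterC fb E' then
  if forcedC fb E' then if inv_forcedC fb E then
  if allL (fun i => allL (fun j => if (qarr_beforeC fb E i j == qarr_beforeC Rb x0 (pp i) (pp j))
       then (qarr_afterC fb E' i j == qarr_afterC Rb rd' (pp i) (pp j)) else false) ords4) ords4
  then Pq x0 x1 x2 y1 y2 rd' else true else true else true else true else true else true.

Definition check1 :=
  allb (fun x0 => allb (fun x1 => allb (fun x2 => allb (fun y1 => allb (fun y2 =>
  allb (fun rd' => allL (fun p0 => allL (fun p1 => allL (fun p2 => allL (fun p3 =>
    c1body x0 x1 x2 y1 y2 rd' p0 p1 p2 p3) ords4) ords4) ords4) ords4)))))).

Lemma check1_ok : check1. Proof. vm_compute. reflexivity. Qed.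

Definition check2 :=
  allb (fun a => allb (fun b => allb (fun c => allb (fun d => allb (fun e =>
  allb (fun e' => let fb := mkbd a b c d in
     if branched_beforeC fb e then if branched_afterC fb e' then
     if (forcedC fb e' || inv_forcedC fb e) then if (forcedC fb e' && inv_forcedC fb e) then true else
     ~~ Pq e c d a b e' else true else true else true)))))).
Lemma check2_ok : check2. Proof. vm_compute. reflexivity. Qed.


Lemma mkbd_etaQ (bd : 'I_4 -> bool) : bd = mkbd (bd Q0) (bd Q1) (bd Q2) (bd Q3).
Proof. by apply: functional_extensionality => i; case: (L4 i) => ->. Qed.
Lemma mk4_etaQ (phi : 'I_4 -> 'I_4) i : phi i = mk4 (phi Q0) (phi Q1) (phi Q2) (phi Q3) i.
Proof. by case: (L4 i) => ->. Qed.

Lemma bo_t2 (T : finType) (opp : T * 'I_3 -> T * 'I_3) bo t1 k1 :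
  is_branching opp bo -> bo (t2 opp t1 k1, k2 opp t1 k1) = ~~ bo (t1, k1).
Proof.
case=> H _; have := H (t1, k1); rewrite /t2 /k2; by case: (opp (t1, k1)).
Qed.

Lemma rbdE (T : finType) (opp : T * 'I_3 -> T * 'I_3) bo t1 k1 :
  rbd opp t1 k1 bo = mkbd (bo (t2 opp t1 k1, ordS (k2 opp t1 k1)))
     (bo (t2 opp t1 k1, ordS (ordS (k2 opp t1 k1))))
     (bo (t1, ordS k1)) (bo (t1, ordS (ordS k1))).
Proof. by apply: functional_extensionality => i; case: (L4 i) => ->. Qed.

Lemma quarters (T : finType) (opp : T * 'I_3 -> T * 'I_3) bo t1 k1 rd' :
  is_branching opp bo -> t1 != t2 opp t1 k1 ->
  let x0 := bo (t1, k1) in let x1 := bo (t1, ordS k1) in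
  let x2 := bo (t1, ordS (ordS k1)) in
  let y1 := bo (t2 opp t1 k1, ordS (k2 opp t1 k1)) in
  let y2 := bo (t2 opp t1 k1, ordS (ordS (k2 opp t1 k1))) in
  forall i, Splus_T opp t1 k1 bo (inr i) =
     (if (i == Q2) || (i == Q3) then st3 x0 x1 x2 else st3 (~~ x0) y1 y2) /\
   Splus_T' opp t1 k1 bo rd' (inr i) =
     (if (i == Q3) || (i == Q0) then st3 x2 y1 rd' else st3 y2 x1 (~~ rd')).
Proof.
move=> Hb Ht x0 x1 x2 y1 y2 i; rewrite /Splus_T /Splus_T' EQ0 EQ2 EQ3.
rewrite (star_rot bo t1 k1) (star_rot bo (t2 opp t1 k1) (k2 opp t1 k1)) bo_t2 //.
split => //.
have Ht' : (t2 opp t1 k1 == t1) = false by rewrite eq_sym (negbTE Ht).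
by rewrite !star_st3 /flip_bo /= !eqxx Ht' rbdE EQ0 EQ1 EQ2 EQ3.
Qed.

Lemma flip_other (T : finType) (opp : T * 'I_3 -> T * 'I_3) bo t1 k1 rd' t k :
  t != t1 -> t != t2 opp t1 k1 -> flip_bo opp t1 k1 bo rd' (t, k) = bo (t, k).
Proof. by move=> H1 H2; rewrite /flip_bo /= (negbTE H1) (negbTE H2). Qed.

Lemma S_pres (T : finType) (opp : T * 'I_3 -> T * 'I_3) bo t1 k1 rd' :
  is_branching opp bo -> t1 != t2 opp t1 k1 ->
  Pq (bo (t1, k1)) (bo (t1, ordS k1)) (bo (t1, ordS (ordS k1)))
     (bo (t2 opp t1 k1, ordS (k2 opp t1 k1)))
     (bo (t2 opp t1 k1, ordS (ordS (k2 opp t1 k1)))) rd' ->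
  forall c, valid_cell opp t1 k1 c ->
     Splus_T opp t1 k1 bo c = Splus_T' opp t1 k1 bo rd' c.
Proof.
move=> Hb Ht HP [t|i].
- case/andP=> H1 H2; rewrite /Splus_T /Splus_T' !star_st3 !flip_other //.
- move=> _; have [-> ->] := quarters rd' Hb Ht i.
  by case/and3P: HP => /eqP -> /eqP -> /eqP ->; rewrite !if_same.
Qed.

Lemma Pq_of (T : finType) (opp : T * 'I_3 -> T * 'I_3) bo t1 k1 rd' :
  is_branching opp bo -> t1 != t2 opp t1 k1 ->
  (forall i, Splus_T opp t1 k1 bo (inr i) = Splus_T' opp t1 k1 bo rd' (inr i)) ->
  Pq (bo (t1, k1)) (bo (t1, ordS k1)) (bo (t1, ordS (ordS k1)))
     (bo (t2 opp t1 k1, ordS (k2 opp t1 k1)))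
     (bo (t2 opp t1 k1, ordS (ordS (k2 opp t1 k1)))) rd'.
Proof.
move=> Hb Ht H.
have := H Q0; have [-> ->] /= := quarters rd' Hb Ht Q0.
have := H Q1; have [-> ->] /= := quarters rd' Hb Ht Q1.
have := H Q2; have [-> ->] /= := quarters rd' Hb Ht Q2.
have := H Q3; have [-> ->] /= := quarters rd' Hb Ht Q3.
move=> E3 E2 E1 E0; by rewrite /Pq -E2 E0 -E3 !eqxx.
Qed.

Lemma c1body_true x0 x1 x2 y1 y2 rd' p0 p1 p2 p3 : c1body x0 x1 x2 y1 y2 rd' p0 p1 p2 p3.
Proof.
have H := check1_ok; rewrite /check1 in H.
move: (allbP H x0) => {}H; move: (allbP H x1) => {}H; move: (allbP H x2) => {}H.
move: (allbP H y1) => {}H; move: (allbP H y2) => {}H; move: (allbP H rd') => {}H.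
move: (allLP H (mem_ords4 p0)) => {}H; move: (allLP H (mem_ords4 p1)) => {}H.
move: (allLP H (mem_ords4 p2)) => {}H; exact: (allLP H (mem_ords4 p3)).
Qed.

Lemma qC01 a b c d e : qarr_beforeC (mkbd a b c d) e Q0 Q1 = a.
Proof. by case: a; case: b; case: c; case: d; case: e. Qed.
Lemma qC12 a b c d e : qarr_beforeC (mkbd a b c d) e Q1 Q2 = b.
Proof. by case: a; case: b; case: c; case: d; case: e. Qed.
Lemma qC23 a b c d e : qarr_beforeC (mkbd a b c d) e Q2 Q3 = c.
Proof. by case: a; case: b; case: c; case: d; case: e. Qed.
Lemma qC30 a b c d e : qarr_beforeC (mkbd a b c d) e Q3 Q0 = d.
Proof. by case: a; case: b; case: c; case: d; case: e. Qed.
Lemma qC02 a b c d e : qarr_beforeC (mkbd a b c d) e Q0 Q2 = e.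
Proof. by case: a; case: b; case: c; case: d; case: e. Qed.
Lemma qA13 a b c d e : qarr_afterC (mkbd a b c d) e Q1 Q3 = e.
Proof. by case: a; case: b; case: c; case: d; case: e. Qed.

Lemma nonamb_Pq (f : bflip) (Hf : is_bflip f) (Hn : non_ambiguous f)
  (T : finType) (opp : T * 'I_3 -> T * 'I_3) bo t1 k1 (phi : {perm 'I_4}) rd' :
  is_branching opp bo -> application f opp bo t1 k1 phi rd' ->
  Pq (bo (t1, k1)) (bo (t1, ordS k1)) (bo (t1, ordS (ordS k1)))
     (bo (t2 opp t1 k1, ordS (k2 opp t1 k1)))
     (bo (t2 opp t1 k1, ordS (ordS (k2 opp t1 k1)))) rd'.
Proof.
move=> Hb [Ht H1 H2].
rewrite qbE rbdE /rd in H1; rewrite qaE rbdE in H2.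
case: Hn => /forcedP Hfo /inv_forcedP Hio; case: Hf; rewrite bbE baE => Hbb Hba.
rewrite (mkbd_etaQ (fbd f)) in H1 H2 Hfo Hio Hbb Hba.
have Ea := H1 Q0 Q1; rewrite qC01 in Ea.
have Eb := H1 Q1 Q2; rewrite qC12 in Eb.
have Ec := H1 Q2 Q3; rewrite qC23 in Ec.
have Ed := H1 Q3 Q0; rewrite qC30 in Ed.
have Ee := H1 Q0 Q2; rewrite qC02 in Ee.
have Ee' := H2 Q1 Q3; rewrite qA13 in Ee'.
rewrite Ea Eb Ec Ed Ee Ee' in H1 H2 Hfo Hio Hbb Hba.
have Hu : uniq [:: phi Q0; phi Q1; phi Q2; phi Q3].
  by rewrite -[[:: _; _; _; _]]/(map phi ords4) (map_inj_uniq (@perm_inj _ phi)).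
have C := c1body_true (bo (t1, k1)) (bo (t1, ordS k1)) (bo (t1, ordS (ordS k1)))
     (bo (t2 opp t1 k1, ordS (k2 opp t1 k1)))
     (bo (t2 opp t1 k1, ordS (ordS (k2 opp t1 k1)))) rd' (phi Q0) (phi Q1) (phi Q2) (phi Q3).
move: C; rewrite /c1body; cbv beta zeta.
rewrite Hu Hbb Hba Hfo Hio.
rewrite (_ : allL _ _ = true) //.
apply: allLI => i _; apply: allLI => j _.
by rewrite -(mk4_etaQ phi i) -(mk4_etaQ phi j) H1 H2 !eqxx.
Qed.

Definition TT := (bool * bool)%type.
Definition tA : TT := (false, false).

Definition oppC (s : TT * 'I_3) : TT * 'I_3 :=
  let: ((m, w), k) := s in
  match m, val k with
  | false, 0 => ((false, ~~ w), C0)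
  | false, 1 => ((true, w), C1)
  | false, _ => ((true, w), C0)
  | true, 0 => ((false, w), C2)
  | true, 1 => ((false, w), C1)
  | true, _ => ((true, ~~ w), C2)
  end.

Definition boC (a b c d e : bool) (s : TT * 'I_3) : bool :=
  let: ((m, w), k) := s in
  match m, w, val k with
  | false, false, 0 => e
  | false, false, 1 => c
  | false, false, _ => d
  | false, true, 0 => ~~ e
  | false, true, 1 => a
  | false, true, _ => b
  | true, false, 0 => ~~ d
  | true, false, 1 => ~~ c
  | true, false, _ => ~~ e
  | true, true, 0 => ~~ b
  | true, true, 1 => ~~ a
  | true, true, _ => e
  end.

Lemma oppC_surf : is_osurface oppC.
Proof.
split.
- by move=> [[[] []] k]; case: (L3 k) => ->.
- by move=> [[[] []] k]; case: (L3 k) => ->.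
- set r := (fun x y => _).
  have st : forall x y k, (oppC (x, k)).1 = y -> connect r x y.
    by move=> x y k H; apply: connect1; apply/existsP; exists k; rewrite H.
  have toA : forall t, connect r t tA.
    move=> [[] []].
    + apply: (connect_trans (st (true, true) (true, false) C2 erefl)).
      exact: (st (true, false) tA C0 erefl).
    + exact: (st (true, false) tA C0 erefl).
    + exact: (st (false, true) tA C0 erefl).
    + exact: connect0.
  have fromA : forall t, connect r tA t.
    move=> [[] []].
    + apply: (connect_trans (st tA (true, false) C1 erefl)).
      exact: (st (true, false) (true, true) C2 erefl).
    + exact: (st tA (true, false) C1 erefl).
    + exact: (st tA (false, true) C0 erefl).
    + exact: connect0.
  by move=> t u; apply: connect_trans (toA t) (fromA u).
Qed.

Definition br3 (x y z : bool) := ~~ ((x == y) && (y == z)).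

Lemma triE (bs : 'I_3 -> bool) : tri_branched (sarr bs) c0 c1 c2 = br3 (bs C0) (bs C1) (bs C2).
Proof.
rewrite /tri_branched /induced /sarr EC0 EC1 EC2.
by case: (bs C0); case: (bs C1); case: (bs C2).
Qed.

Lemma bbC a b c d e : branched_beforeC (mkbd a b c d) e = br3 a b (~~ e) && br3 e c d.
Proof. by case: a; case: b; case: c; case: d; case: e. Qed.

Lemma boC_branching a b c d e : branched_beforeC (mkbd a b c d) e ->
  is_branching oppC (boC a b c d e).
Proof.
rewrite bbC => H; split.
- by move=> [[[] []] k]; case: (L3 k) => -> /=; rewrite ?negbK.
- move=> t; rewrite triE; move: H; case: t => [[] []] /=;
  by case: a; case: b; case: c; case: d; case: e.
Qed.

Lemma rbdC a b c d e : rbd oppC tA C0 (boC a b c d e) = mkbd a b c d.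
Proof. by apply: functional_extensionality => i; case: (L4 i) => ->. Qed.

Lemma check2_inst a b c d e e' :
  branched_beforeC (mkbd a b c d) e -> branched_afterC (mkbd a b c d) e' ->
  forcedC (mkbd a b c d) e' || inv_forcedC (mkbd a b c d) e ->
  ~~ (forcedC (mkbd a b c d) e' && inv_forcedC (mkbd a b c d) e) ->
  ~~ Pq e c d a b e'.
Proof.
have H := check2_ok; rewrite /check2 in H.
move: (allbP H a) => {}H; move: (allbP H b) => {}H; move: (allbP H c) => {}H.
move: (allbP H d) => {}H; move: (allbP H e) => {}H; move: (allbP H e') => {}H.
move: H; cbv beta zeta => H H1 H2 H3 H4; move: H; rewrite H1 H2 H3.
by move/negbTE: H4 => ->.
Qed.

Unset Implicit Arguments.
Theorem proposition2p2 (f : bflip) (Hf : is_bflip f) :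
  (non_ambiguous f <->
     sliding f /\
     (forall (T : finType) (opp : T * 'I_3 -> T * 'I_3) (bo : T * 'I_3 -> bool)
             (t1 : T) (k1 : 'I_3) (phi : {perm 'I_4}) (rd' : bool),
        is_osurface opp -> is_branching opp bo ->
        application f opp bo t1 k1 phi rd' ->
        forall c : cell T, valid_cell opp t1 k1 c ->
          Splus_T opp t1 k1 bo c = Splus_T' opp t1 k1 bo rd' c /\
          Sminus_T opp t1 k1 bo c = Sminus_T' opp t1 k1 bo rd' c))
  /\
  (non_ambiguous f ->
     forall (T : finType) (opp : T * 'I_3 -> T * 'I_3) (bo : T * 'I_3 -> bool)
            (t1 : T) (k1 : 'I_3) (phi : {perm 'I_4}) (rd' : bool),
       is_osurface opp -> is_branching opp bo ->
       application f opp bo t1 k1 phi rd' ->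
       forall (c : cell T) (k : 'I_3), valid_cell opp t1 k1 c ->
         bnd opp t1 k1 (Splus_T opp t1 k1 bo) c k
           = bnd opp t1 k1 (Splus_T' opp t1 k1 bo rd') c k /\
         bnd opp t1 k1 (Sminus_T opp t1 k1 bo) c k
           = bnd opp t1 k1 (Sminus_T' opp t1 k1 bo rd') c k).
Proof.
have pres : non_ambiguous f ->
     forall (T : finType) (opp : T * 'I_3 -> T * 'I_3) (bo : T * 'I_3 -> bool)
             (t1 : T) (k1 : 'I_3) (phi : {perm 'I_4}) (rd' : bool),
        is_branching opp bo ->
        application f opp bo t1 k1 phi rd' ->
        forall c : cell T, valid_cell opp t1 k1 c ->
          Splus_T opp t1 k1 bo c = Splus_T' opp t1 k1 bo rd' c.
  move=> Hn T opp bo t1 k1 phi rd' Hb Happ.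
  apply: S_pres => //; first by case: Happ.
  exact: (nonamb_Pq Hf Hn Hb Happ).
have valid_nb : forall (T : finType) (opp : T * 'I_3 -> T * 'I_3) t1 k1 c k,
    valid_cell opp t1 k1 (nb opp t1 k1 c k).
  move=> T opp t1 k1 c k.
  have cos : forall s, valid_cell opp t1 k1 (cell_of_side opp t1 k1 s).
    move=> s; rewrite /cell_of_side; case: ifP => // H1; case: ifP => // H2.
    by rewrite /= H1 H2.
  case: c => [t|i] /=; first exact: cos.
  by case: (val k) => [|[|n]] //; apply: cos.
split; last first.
  move=> Hn T opp bo t1 k1 phi rd' _ Hb Happ c k Hc.
  have E1 := pres Hn T opp bo t1 k1 phi rd' Hb Happ c Hc.
  have E2 := pres Hn T opp bo t1 k1 phi rd' Hb Happ _ (valid_nb T opp t1 k1 c k).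
  by rewrite /bnd /Sminus_T /Sminus_T' E1 E2.
split.
  move=> Hn; split; first by left; case: Hn.
  move=> T opp bo t1 k1 phi rd' _ Hb Happ c Hc.
  by rewrite /Sminus_T /Sminus_T' (pres Hn T opp bo t1 k1 phi rd' Hb Happ c Hc).
case=> Hsl Hall.
case Hn: (forcedC (fbd f) (fd' f) && inv_forcedC (fbd f) (fd f)).
  by case/andP: Hn => /forcedP H1 /inv_forcedP H2; split.
exfalso.
set a := fbd f Q0; set b := fbd f Q1; set c := fbd f Q2; set d := fbd f Q3.
have Hbb : branched_beforeC (mkbd a b c d) (fd f).
  by case: Hf; rewrite bbE -mkbd_etaQ.
have Hba : branched_afterC (mkbd a b c d) (fd' f).
  by case: Hf; rewrite baE -mkbd_etaQ.
have Hs : forcedC (mkbd a b c d) (fd' f) || inv_forcedC (mkbd a b c d) (fd f).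
  by rewrite -mkbd_etaQ; case: Hsl => [/forcedP -> | /inv_forcedP ->]; rewrite ?orbT.
have Hn' : ~~ (forcedC (mkbd a b c d) (fd' f) && inv_forcedC (mkbd a b c d) (fd f)).
  by rewrite -mkbd_etaQ Hn.
have NP := check2_inst Hbb Hba Hs Hn'.
have Hb := boC_branching Hbb.
have Happ : application f oppC (boC a b c d (fd f)) tA C0 1 (fd' f).
  split => //.
  - by move=> i j; rewrite !perm1 rbdC qbE {1}(mkbd_etaQ (fbd f)).
  - by move=> i j; rewrite !perm1 rbdC qaE {1}(mkbd_etaQ (fbd f)).
have HP : Pq (fd f) c d a b (fd' f).
  apply: (Pq_of (opp := oppC) (bo := boC a b c d (fd f)) (t1 := tA) (k1 := C0) Hb) => //.
  by move=> i; case: (Hall _ _ _ _ _ _ _ oppC_surf Hb Happ (inr i) isT).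
by rewrite HP in NP.
Qed.
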